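(* Let $\tau$ be a representation of a Lie group $\mathbf{G}\subseteq\mathrm{GL}(D)$ on $\mathbb{K}^N$ ($\mathbb{K}\in\{\mathbb{R},\mathbb{C}\}$) and let $\mathcal{D}_B=\sum_{j=1}^DB_j\partial/\partial x_j+mE$ be covariant with respect to $\tau$, with symbol $\sigma_{\mathcal{D}_B}(p_1,\dots,p_D)=i\sum_{j=1}^DB_jp_j$. (a) If $\mathbf{G}\subseteq\mathrm{O}(D)$, the form of $\sigma_{\mathcal{D}_B}$ does not change under the simultaneous coordinate transformations $x\mapsto gx$ in $\mathbb{R}^D$ and $y\mapsto\tau(g)y$ in $\mathbb{K}^N$; that is, $\sigma_{\mathcal{D}_B}(gp)=\tau(g)\,\sigma_{\mathcal{D}_B}(p)\,\tau(g)^{-1}$ for all $g\in\mathbf{G}$, $p\in\mathbb{R}^D$. (b) If $\mathbf{G}$ is $\mathrm{SO}(D)$ or $\mathrm{O}(D)$, then $\det\sigma_{\mathcal{D}_B}(p_1,\dots,p_D)=C\,(p_1^2+\dots+p_D^2)^n$ for some constant $C\in\mathbb{C}$ and $n\in\mathbb{N}$; moreover, if $N$ is odd then $C=0$ (so elliptic operators covariant with respect to a representation of $\mathrm{SO}(D)$ or $\mathrm{O}(D)$ can exist only if $N$ is even).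
   Context: $E$ is the $N\times N$ identity matrix, $m\in\mathbb{R}$, $B_j\in M_{N\times N}(\mathbb{K})$. Covariance of $\mathcal{D}_B$ with respect to $\tau$ means $\sum_{k=1}^D g_{jk}\,\tau(g)B_k\tau(g^{-1})=B_j$ for all $j$ and all $g\in\mathbf{G}$ ($g_{jk}$ the entries of $g$). *)

(* Defs.v *)
From HB Require Import structures.
From mathcomp Require Import all_boot all_order all_algebra.
From mathcomp Require Import reals.
From mathcomp Require Export complex.
Set Implicit Arguments. Unset Strict Implicit. Unset Printing Implicit Defensive.
Import Order.TTheory GRing.Theory Num.Theory.
Local Open Scope ring_scope.
Local Open Scope complex_scope.

Inductive scalar_field := K_R | K_C.

(* An element of C lies in K (viewed inside C). *)
Definition in_K (R : rcfType) (K : scalar_field) (z : R[i]) : bool :=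
  if K is K_R then Im z == 0 else true.

Definition mx_in_K (R : rcfType) (K : scalar_field) (N : nat) (A : 'M[R[i]]_N) :=
  forall i j, in_K K (A i j).

Definition orthogonal_mx (R : rcfType) (D : nat) (g : 'M[R]_D) : bool :=
  g *m g^T == 1%:M.
Definition special_orthogonal_mx (R : rcfType) (D : nat) (g : 'M[R]_D) : bool :=
  orthogonal_mx g && (\det g == 1).

Definition is_subgroup_GL (R : rcfType) (D : nat) (G : 'M[R]_D -> Prop) :=
  [/\ G 1%:M,
      (forall g, G g -> g \in unitmx),
      (forall g h, G g -> G h -> G (g *m h)) &
      (forall g, G g -> G (invmx g))].

Definition is_representation (R : rcfType) (K : scalar_field) (D N : nat)
    (G : 'M[R]_D -> Prop) (tau : 'M[R]_D -> 'M[R[i]]_N) :=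
  [/\ (forall g, G g -> tau g \in unitmx),
      (forall g, G g -> mx_in_K K (tau g)),
      tau 1%:M = 1%:M &
      (forall g h, G g -> G h -> tau (g *m h) = tau g *m tau h)].

(* Covariance of D_B = sum_j B_j d/dx_j + m E with respect to tau:
   sum_k g_jk tau(g) B_k tau(g)^{-1} = B_j for all j and g in G. *)
Definition covariant (R : rcfType) (D N : nat) (G : 'M[R]_D -> Prop)
    (tau : 'M[R]_D -> 'M[R[i]]_N) (B : 'I_D -> 'M[R[i]]_N) :=
  forall g, G g -> forall j : 'I_D,
    \sum_(k < D) (g j k)%:C *: (tau g *m B k *m invmx (tau g)) = B j.

Definition symbol (R : rcfType) (D N : nat) (B : 'I_D -> 'M[R[i]]_N)
    (p : 'cV[R]_D) : 'M[R[i]]_N :=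
  'i *: \sum_(j < D) (p j 0)%:C *: B j.

(* Main.v *)
Require Import Defs.
From HB Require Import structures.
From mathcomp Require Import all_boot all_order all_algebra.
From mathcomp Require Import reals complex ring lra.
Import Order.TTheory GRing.Theory Num.Theory.
Local Open Scope ring_scope.
Local Open Scope complex_scope.
Set Implicit Arguments. Unset Strict Implicit.

Section H.
Variable F : comNzRingType.

Lemma det_1_rank1 n (u w : 'cV[F]_n) :
  \det (1%:M + u *m w^T) = 1 + (w^T *m u) 0 0.
Proof.
pose M := block_mx (1%:M : 'M_n) u (- w^T) (1%:M : 'M_1).
have E1 : M = block_mx 1%:M 0 (- w^T) 1%:M *m block_mx 1%:M u 0 (1%:M + w^T *m u).
  rewrite mulmx_block !mul1mx !mulmx1 !mul0mx !addr0 mulNmx.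
  by rewrite addrCA addNr addr0.
have E2 : M = block_mx (1%:M + u *m w^T) u 0 1%:M *m block_mx 1%:M 0 (- w^T) 1%:M.
  rewrite mulmx_block !mul1mx !mulmx1 !mul0mx !mulmx0 !add0r mulmxN.
  by rewrite addrK.
have := congr1 determinant E1; rewrite E2 !det_mulmx det_lblock det_ublock.
rewrite det_ublock !det1 !mul1r !mulr1 => ->.
rewrite [_ + _ in LHS]mx11_scalar det_scalar1 !mxE. by rewrite eqxx.
Qed.
End H.
Section HH.
Variable R : rcfType.
Variable n : nat.
Implicit Types a b v : 'cV[R]_n.

Definition dot a b := \sum_(i < n) a i 0 * b i 0.
Definition refl v : 'M[R]_n := 1%:M - (2 / dot v v) *: (v *m v^T).

Lemma trmx_dot a b : a^T *m b = (dot a b)%:M.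
Proof.
apply/matrixP => i j; rewrite !ord1 !mxE eqxx mulr1n.
by apply: eq_bigr => k _; rewrite mxE.
Qed.

Lemma dotC a b : dot a b = dot b a.
Proof. by apply: eq_bigr => i _; rewrite mulrC. Qed.

Lemma dotBl a b c : dot (a - b) c = dot a c - dot b c.
Proof. by rewrite /dot -sumrB; apply: eq_bigr => i _; rewrite !mxE mulrBl. Qed.

Lemma dot_eq0 v : (dot v v == 0) = (v == 0).
Proof.
apply/idP/idP => [|/eqP->]; last by rewrite /dot big1 // => i _; rewrite mxE mul0r.
rewrite /dot psumr_eq0 => [/allP H|i _]; last by rewrite -expr2 sqr_ge0.
apply/eqP/matrixP => i j; rewrite !ord1 mxE.
by have := H i (mem_index_enum _); rewrite mulf_eq0 orbb => /eqP.
Qed.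

Lemma refl_apply v a : refl v *m a = a - (2 * dot v a / dot v v) *: v.
Proof.
rewrite /refl mulmxBl mul1mx -scalemxAl -mulmxA trmx_dot mul_mx_scalar scalerA.
by rewrite mulrAC.
Qed.

Lemma refl_sym v : (refl v)^T = refl v.
Proof. by rewrite /refl linearB /= trmx1 linearZ /= trmx_mul trmxK. Qed.

Lemma refl_orth v : v != 0 -> orthogonal_mx (refl v).
Proof.
rewrite -dot_eq0 => nz; rewrite /orthogonal_mx refl_sym; apply/eqP.
rewrite /refl mulmxBl mul1mx mulmxBr mulmx1 -!scalemxAl -!scalemxAr.
rewrite -mulmxA (mulmxA v^T) trmx_dot mul_scalar_mx -scalemxAr.
rewrite !scalerA; set c := 2 / dot v v.
have -> : c * (c * dot v v) = c *+ 2 by rewrite /c divfK // mulr_natr.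
rewrite -scalerMnl; move: (c *: _) => X; rewrite mulr2n.
by rewrite opprB addrK subrK.
Qed.

Lemma refl_det v : v != 0 -> \det (refl v) = -1.
Proof.
rewrite -dot_eq0 => nz.
have -> : refl v = 1%:M + (- (2 / dot v v) *: v) *m v^T.
  by rewrite /refl -scalemxAl scaleNr.
rewrite det_1_rank1 -scalemxAr trmx_dot !mxE eqxx mulr1n mulNr divfK //.
by rewrite -[2]/(1 + 1) opprD addrA subrr add0r.
Qed.

Lemma refl_swap a b : dot a a = dot b b -> a != b -> refl (a - b) *m a = b.
Proof.
move=> eab; rewrite -subr_eq0 => nz; rewrite refl_apply.
have H : dot (a - b) (a - b) = 2 * dot (a - b) a.
  rewrite dotBl !(dotC _ (a - b)) !dotBl eab dotC; lra.
rewrite -H divff ?dot_eq0 // scale1r.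
by rewrite opprB addrC subrK.
Qed.
Lemma dot_delta (i : 'I_n) r : dot (r *: delta_mx i 0) (r *: delta_mx i 0) = r ^+ 2.
Proof.
rewrite /dot (bigD1 i) //= big1 ?addr0 => [|j /negbTE nj].
  by rewrite !mxE !eqxx mulr1 expr2.
by rewrite !mxE nj /= mulr0 mul0r.
Qed.

Lemma dotNN a : dot (- a) (- a) = dot a a.
Proof. by apply: eq_bigr => i _; rewrite !mxE mulrNN. Qed.

Lemma dot_ge0 a : 0 <= dot a a.
Proof. by apply: sumr_ge0 => i _; rewrite -expr2 sqr_ge0. Qed.

Lemma refl2_SO a b : a != 0 -> b != 0 -> special_orthogonal_mx (refl a *m refl b).
Proof.
move=> na nb; apply/andP; split.
  rewrite /orthogonal_mx trmx_mul -mulmxA (mulmxA (refl b)).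
  by rewrite (eqP (refl_orth nb)) mul1mx (eqP (refl_orth na)).
by rewrite det_mulmx !refl_det // mulrNN mulr1.
Qed.
End HH.

Section Main.
Variable R : realType.

Lemma key_sum (D N : nat) (G : 'M[R]_D -> Prop) (tau : 'M[R]_D -> 'M[R[i]]_N)
  (B : 'I_D -> 'M[R[i]]_N) g :
  covariant G tau B -> G g -> orthogonal_mx g -> forall k,
  \sum_(j < D) (g j k)%:C *: B j = tau g *m B k *m invmx (tau g).
Proof.
move=> cov Gg /eqP og k.
set C := fun l => tau g *m B l *m invmx (tau g).
have og' : g^T *m g = 1%:M by apply: mulmx1C.
under eq_bigr => j _ do rewrite -(cov g Gg j) scaler_sumr.
rewrite exchange_big /=.
under eq_bigr => l _ do under eq_bigr => j _ do rewrite scalerA -rmorphM.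
under eq_bigr => l _ do rewrite -scaler_suml -rmorph_sum.
have E : forall l, \sum_(j < D) g j k * g j l = (g^T *m g) k l.
  by move=> l; rewrite mxE; apply: eq_bigr => j _; rewrite mxE.
under eq_bigr => l _ do rewrite E og' mxE.
rewrite (bigD1 k) //= big1 ?addr0; first by rewrite eqxx scale1r.
by move=> l /negbTE; rewrite eq_sym => ->; rewrite scale0r.
Qed.

Lemma symbol_g (D N : nat) (G : 'M[R]_D -> Prop) (tau : 'M[R]_D -> 'M[R[i]]_N)
  (B : 'I_D -> 'M[R[i]]_N) g (p : 'cV[R]_D) :
  covariant G tau B -> G g -> orthogonal_mx g ->
  symbol B (g *m p) = tau g *m symbol B p *m invmx (tau g).
Proof.
move=> cov Gg og; rewrite /symbol -scalemxAr -scalemxAl; congr (_ *: _).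
rewrite mulmx_sumr mulmx_suml.
under [RHS]eq_bigr => k _ do rewrite -scalemxAr -scalemxAl -(key_sum cov Gg og) scaler_sumr.
rewrite exchange_big /=; apply: eq_bigr => j _.
rewrite mxE rmorph_sum scaler_suml; apply: eq_bigr => k _.
by rewrite scalerA rmorphM mulrC.
Qed.

Lemma symbolZ (D N : nat) (B : 'I_D -> 'M[R[i]]_N) (c : R) (p : 'cV[R]_D) :
  symbol B (c *: p) = c%:C *: symbol B p.
Proof.
rewrite /symbol [RHS]scalerA (mulrC c%:C) -scalerA; f_equal; rewrite scaler_sumr.
by apply: eq_bigr => j _; rewrite mxE scalerA rmorphM.
Qed.

End Main.

Theorem lemma2p7 (R : realType) (K : scalar_field) (D N : nat)
    (G : 'M[R]_D -> Prop) (tau : 'M[R]_D -> 'M[R[i]]_N)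
    (B : 'I_D -> 'M[R[i]]_N) (m : R) :
  is_subgroup_GL G ->
  is_representation K G tau ->
  (forall j, mx_in_K K (B j)) ->
  covariant G tau B ->
  (* (a) *)
  ((forall g, G g -> orthogonal_mx g) ->
     forall g p, G g ->
       symbol B (g *m p) = tau g *m symbol B p *m invmx (tau g)) /\
  (* (b) *)
  ((forall g, G g <-> special_orthogonal_mx g) /\ (2 <= D)%N \/
   (forall g, G g <-> orthogonal_mx g) ->
     exists (C : R[i]) (n : nat),
       (forall p : 'cV[R]_D,
          \det (symbol B p) = C * ((\sum_(j < D) p j 0 ^+ 2)%:C) ^+ n) /\
       (odd N -> C = 0)).
Proof.
move=> [G1 Gu GM GV] [tu tK t1 tM] BK cov.
have partA : (forall g, G g -> orthogonal_mx g) -> forall g p, G g ->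
    symbol B (g *m p) = tau g *m symbol B p *m invmx (tau g).
  by move=> Go g p Gg; apply: (symbol_g p cov Gg (Go g Gg)).
split => // hyp.
have Go : forall g, G g -> orthogonal_mx g.
  by case: hyp => [[H _]|H] g /H //; case/andP.
pose f p := \det (symbol B p).
have finv : forall g p, G g -> f (g *m p) = f p.
  move=> g p Gg; rewrite /f partA // !det_mulmx det_inv mulrC mulrA mulVf ?mul1r //.
  by rewrite -unitfE -unitmxE; apply: tu.
have fZ : forall c p, f (c *: p) = c%:C ^+ N * f p.
  by move=> c p; rewrite /f symbolZ detZ.
have sumE : forall p : 'cV[R]_D, \sum_(j < D) p j 0 ^+ 2 = dot p p.
  by move=> p; apply: eq_bigr => j _; rewrite expr2.
rewrite -/(f _); clear partA tK BK GV GM Gu tM t1 tu cov.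
destruct D as [|d].
  exists (f 0), 0%N; split.
    move=> p; rewrite expr0 mulr1; congr f.
    by apply/matrixP => -[].
  move=> oN; rewrite /f /symbol big_ord0 scaler0; clear -oN.
  by case: N oN => // n _; rewrite det0.
pose e1 : 'cV[R]_d.+1 := delta_mx 0 0.
have trans : forall (r : R) b, dot b b = r ^+ 2 -> exists g, G g /\ g *m (r *: e1) = b.
  move=> r b hb; set q := r *: e1.
  have hq : dot q q = r ^+ 2 by rewrite dot_delta.
  case: (eqVneq b q) => [->|nbq]; first by exists 1%:M; rewrite mul1mx.
  have hr : r != 0.
    apply: contra_neq nbq => r0; move: hb; rewrite r0 expr0n /=.
    by move/eqP; rewrite dot_eq0 /q r0 scale0r => /eqP.

  have nqb : q != b by rewrite eq_sym.
  have q0 : q != 0 by rewrite -dot_eq0 hq sqrf_eq0.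
  case: hyp => [[HSO D2]|HO].
  - have hr' : r <> - r by move=> E; move/eqP: hr; apply; lra.
    case: (eqVneq b (-q)) => [bq | nbq'].
    + pose i1 : 'I_d.+1 := Ordinal D2.
      set x := r *: (delta_mx i1 0 : 'cV[R]_d.+1).
      have hx : dot x x = r ^+ 2 by rewrite dot_delta.
      have nqx : q != x.
        apply/eqP => /matrixP /(_ 0 0); rewrite !mxE /=.
        by rewrite mulr1 mulr0; move/eqP: hr.
      have nxb : x != b.
        rewrite bq; apply/eqP => /matrixP /(_ 0 0); rewrite !mxE /=.
        by rewrite mulr1 mulr0 => /eqP; rewrite eq_sym oppr_eq0 (negbTE hr).
      exists (refl (x - b) *m refl (q - x)); split.
        by apply/HSO; apply: refl2_SO; rewrite subr_eq0.
      by rewrite -mulmxA refl_swap ?hx ?hq // refl_swap ?hx ?hb.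
    + have nqq : q != - q.
        apply/negP => /eqP /matrixP /(_ 0 0); rewrite !mxE /= mulr1; exact: hr'.
      have nqb' : - q != b by rewrite eq_sym.
      exists (refl (- q - b) *m refl (q - - q)); split.
        by apply/HSO; apply: refl2_SO; rewrite subr_eq0.
      by rewrite -mulmxA refl_swap ?dotNN // refl_swap ?dotNN ?hq ?hb.
  - exists (refl (q - b)); split; last by rewrite refl_swap ?hq ?hb.
    by apply/HO; apply: refl_orth; rewrite subr_eq0.
have he1 := @dot_delta R _ (0 : 'I_d.+1) 1; rewrite scale1r -/e1 in he1.
have fodd : odd N -> f e1 = 0.
  move=> oN; have [g [Gg Hg]] : exists g, G g /\ g *m (1 *: e1) = - e1.
    by apply: trans; rewrite dotNN he1.
  have := finv g (1 *: e1) Gg; rewrite Hg -scaleN1r fZ scale1r.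
  rewrite rmorphN rmorph1 -signr_odd oN expr1 mulN1r.
  move/eqP; rewrite eq_sym -subr_eq0 opprK -mulr2n mulrn_eq0 /=.
  by move/eqP.
exists (f e1), N./2; split => // p.
set r := Num.sqrt (dot p p).
have [g [Gg Hg]] : exists g, G g /\ g *m (r *: e1) = p.
  by apply: trans; rewrite sqr_sqrtr // dot_ge0.
rewrite -/(f p) sumE -[in f p]Hg finv // fZ.
case oN: (odd N); first by rewrite fodd // !mulr0 mul0r.
have hN : (2 * N./2)%N = N by rewrite mul2n -[RHS]odd_double_half oN.
by rewrite -[in r%:C ^+ N]hN exprM -rmorphXn sqr_sqrtr ?dot_ge0 // mulrC.
Qed.
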